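(* In the setting of a chain BN $X_0\to X_1\to\dots\to X_{n+1}$ with fixed root marginal $P(X_0=1)=q\in(0,1)$, all non-root nodes sharing the table $P(X_i=1\mid X_{i-1}=b)=p_b$, and $f(x)=x_{n+1}$: (1) if $p_0=10^{-5}$ and $p_1=0.5+10^{-5}+0.353$ (so $D_\mu=0.853$), then $D_\mu+D_\sigma>1.2$ and $L_1(f)=\Omega(1.2^n)$; (2) for every $c\in(0,0.0246]$, if $p_0=c$ and $p_1=0.5+c+2\sqrt c$, then $D_\mu+D_\sigma>1+c$ and $L_1(f)=\Omega((1+c)^n)$.
   Context: $D_\mu=|p_1-p_0|$ and $D_\sigma=|\sqrt{p_1(1-p_1)}-\sqrt{p_0(1-p_0)}|$. For a BN, $\mu_{v,x_{\operatorname{pa}(v)}}=P(X_v=1\mid X_{\operatorname{pa}(v)}=x_{\operatorname{pa}(v)})$, $\sigma_{v,x_{\operatorname{pa}(v)}}=\sqrt{\mu_{v,x_{\operatorname{pa}(v)}}(1-\mu_{v,x_{\operatorname{pa}(v)}})}$, the BN-induced basis is $\phi_v(x)=(x_v-\mu_{v,x_{\operatorname{pa}(v)}})/\sigma_{v,x_{\operatorname{pa}(v)}}$, $\phi_S=\prod_{v\in S}\phi_v$; $\hat f_S=\mathbb{E}[f(X)\phi_S(X)]$; $L_1(f)=\sum_S|\hat f_S|$. Asymptotics are as $n\to\infty$ with $q$ fixed. *)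

(* Defs.v *)
From HB Require Import structures.
From mathcomp Require Import all_boot all_order all_algebra.
From mathcomp Require Import reals.
Set Implicit Arguments. Unset Strict Implicit. Unset Printing Implicit Defensive.
Import Order.TTheory GRing.Theory Num.Theory.
Local Open Scope ring_scope.

Section Chain.
Variables (R : realType) (n : nat) (q p0 p1 : R).

Definition bool2R (b : bool) : R := if b then 1 else 0.

Definition ptab (b : bool) : R := if b then p1 else p0.

Definition chain_mu (v : 'I_n.+2) (x : {ffun 'I_n.+2 -> bool}) : R :=
  match val v with
  | 0 => q
  | k.+1 => ptab (x (inord k))
  end.

Definition chain_sigma (v : 'I_n.+2) (x : {ffun 'I_n.+2 -> bool}) : R := Num.sqrt (chain_mu v x * (1 - chain_mu v x)).

Definition chain_prob (x : {ffun 'I_n.+2 -> bool}) : R :=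
  \prod_(v : 'I_n.+2) (if x v then chain_mu v x else 1 - chain_mu v x).

Definition phi (v : 'I_n.+2) (x : {ffun 'I_n.+2 -> bool}) : R := (bool2R (x v) - chain_mu v x) / chain_sigma v x.
Definition phiS (S : {set 'I_n.+2}) (x : {ffun 'I_n.+2 -> bool}) : R := \prod_(v in S) phi v x.

Definition fhat (f : {ffun 'I_n.+2 -> bool} -> R) (S : {set 'I_n.+2}) : R :=
  \sum_(x : {ffun 'I_n.+2 -> bool}) chain_prob x * f x * phiS S x.

Definition L1 (f : {ffun 'I_n.+2 -> bool} -> R) : R :=
  \sum_(S : {set 'I_n.+2}) `|fhat f S|.

Definition f_last (x : {ffun 'I_n.+2 -> bool}) : R := bool2R (x ord_max).

End Chain.

Definition L1_last (R : realType) (q p0 p1 : R) (n : nat) : R :=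
  @L1 R n q p0 p1 (@f_last R n).

Definition D_mu (R : realType) (p0 p1 : R) : R := `|p1 - p0|.
Definition D_sigma (R : realType) (p0 p1 : R) : R :=
  `|Num.sqrt (p1 * (1 - p1)) - Num.sqrt (p0 * (1 - p0))|.

Definition BigOmegaPow (R : realType) (u : nat -> R) (r : R) : Prop :=
  exists C : R, 0 < C /\ exists N : nat, forall m : nat, (N <= m)%N -> C * r ^+ m <= u m.

(* Main.v *)
Require Import Defs.
From HB Require Import structures.
From mathcomp Require Import all_boot all_order all_algebra.
From mathcomp Require Import reals zify ring lra.
Import Order.TTheory GRing.Theory Num.Theory.
Local Open Scope ring_scope.

Section Gen.
Variable R : realType.

Definition Wt (w : nat -> bool -> bool -> R) N (x : {ffun 'I_N.+1 -> bool}) : R :=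
  \prod_(i < N.+1) w i (x (inord i.-1)) (x (inord i)).

Lemma key (w : nat -> bool -> bool -> R) N (g : bool -> R) :
  \sum_(x : {ffun 'I_N.+2 -> bool}) Wt w N.+1 x * g (x (inord N.+1)) =
  \sum_(y : {ffun 'I_N.+1 -> bool}) Wt w N y * \sum_b (w N.+1 (y (inord N)) b * g b).
Proof.
pose h := fun (p : {ffun 'I_N.+1 -> bool} * bool) =>
  [ffun i : 'I_N.+2 => if (i < N.+1)%N then p.1 (inord i) else p.2].
have hv : forall p k, (k < N.+1)%N -> h p (inord k) = p.1 (inord k).
  move=> p k hk; rewrite ffunE inordK ?hk //; exact: ltnW.
have hN : forall p, h p (inord N.+1) = p.2.
  by move=> p; rewrite ffunE inordK // ltnn.
rewrite (reindex h); last first.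
  exists (fun x : {ffun 'I_N.+2 -> bool} => ([ffun j : 'I_N.+1 => x (inord j)], x (inord N.+1))).
    move=> [y b] _ /=; congr pair; last by rewrite hN.
    by apply/ffunP => j; rewrite ffunE hv // inord_val.
  move=> x _; apply/ffunP => i; rewrite ffunE /=.
  case: ifP => hi; first by rewrite ffunE inordK // inord_val.
  congr (x _); apply: val_inj; rewrite /= inordK //.
  move: (ltn_ord i) hi => /=; lia.
rewrite (eq_bigr (fun p => Wt w N.+1 (h (p.1, p.2)) * g (h (p.1,p.2) (inord N.+1)))); last by move=> [].
rewrite -(pair_bigA _ (fun y b => Wt w N.+1 (h (y, b)) * g (h (y,b) (inord N.+1)))).
apply: eq_bigr => y _; rewrite mulr_sumr; apply: eq_bigr => b _.
rewrite hN /Wt big_ord_recr /= hN hv //= mulrA; congr (_ * _ * _).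
apply: eq_bigr => i _ /=; rewrite !hv //.
exact: leq_ltn_trans (leq_pred i) (ltn_ord i).
Qed.

Lemma base (w : nat -> bool -> bool -> R) (g : bool -> R) :
  \sum_(x : {ffun 'I_1 -> bool}) Wt w 0 x * g (x (inord 0)) =
  \sum_b w 0 b b * g b.
Proof.
have E := @bigA_distr_bigA R 0 1 *%R +%R _ _ (fun (_ : 'I_1) (b : bool) => w 0 b b * g b).
rewrite big_ord1 in E; rewrite E; apply: eq_bigr => x _.
by rewrite big_ord1 /Wt big_ord1 /=; congr (w 0 (x _) (x _) * g (x _)); apply: val_inj; rewrite /= inordK.
Qed.

End Gen.

Section Spec.
Variables (R : realType) (q p0 p1 : R).

Definition mu (k : nat) (a : bool) : R := if k is 0 then q else ptab p0 p1 a.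
Definition sg (m : R) : R := Num.sqrt (m * (1 - m)).
Definition ww (k : nat) (a c : bool) : R :=
  (if c then mu k a else 1 - mu k a) * ((bool2R R c - mu k a) / sg (mu k a) + 1).

Lemma link n (x : {ffun 'I_n.+2 -> bool}) :
  chain_prob q p0 p1 x * f_last R x * \sum_(S : {set 'I_n.+2}) phiS q p0 p1 S x
  = Wt R ww n.+1 x * bool2R R (x (inord n.+1)).
Proof.
have -> : \sum_(S : {set 'I_n.+2}) phiS q p0 p1 S x = \prod_v (phi q p0 p1 v x + 1).
  rewrite (bigA_distr 1 +%R (fun v => phi q p0 p1 v x) (fun _ => 1)).
  by apply: eq_bigr => S _; rewrite /phiS big_mkcond.
rewrite /f_last mulrAC /chain_prob -big_split /=.
have -> : (ord_max : 'I_n.+2) = inord n.+1 by apply: val_inj; rewrite /= inordK.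
congr (_ * _); apply: eq_bigr => v _; rewrite inord_val.
case: v => [[|k] Hk]; rewrite /phi /chain_sigma /chain_mu /ww /mu //=.
Qed.


Hypotheses (hq : 0 < q < 1) (hp0 : 0 < p0 < 1) (hp1 : 0 < p1 < 1).

Lemma mu_b k a : 0 < mu k a < 1.
Proof. by case: k => [|k] //=; case: a. Qed.

Lemma sg_pos m : 0 < m < 1 -> 0 < sg m.
Proof. move=> /andP[h1 h2]; rewrite /sg sqrtr_gt0; apply: mulr_gt0; lra. Qed.

Lemma sg_sq m : 0 < m < 1 -> sg m ^+ 2 = m * (1 - m).
Proof. move=> /andP[h1 h2]; rewrite /sg sqr_sqrtr //; apply: mulr_ge0; lra. Qed.

Lemma wsum k a : ww k a true + ww k a false = 1.
Proof. rewrite /ww /=; ring. Qed.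

Lemma wtrue k a : ww k a true = mu k a + sg (mu k a).
Proof.
rewrite /ww /=.
have hm := mu_b k a; have hs := sg_sq _ hm; have s0 : sg (mu k a) != 0 by rewrite gt_eqF // (sg_pos _ hm).
move: hs s0; set s := sg _; set m := mu k a => hs s0.
have -> : m * ((1 - m) / s + 1) = (m * (1 - m)) / s + m by ring.
by rewrite -hs expr2 mulfK // addrC.
Qed.

Definition G N (g : bool -> R) := \sum_(x : {ffun 'I_N.+1 -> bool}) Wt R ww N x * g (x (inord N)).

Lemma G1 N : G N (fun _ => 1) = 1.
Proof.
elim: N => [|N IH].
  by rewrite /G (base _ _ (fun _ => 1)) big_bool /= !mulr1 wsum.
rewrite /G (key _ _ _ (fun _ => 1)) -[RHS]IH; apply: eq_bigr => y _; congr (_ * _).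
by rewrite big_bool /= !mulr1 wsum.
Qed.

Definition rr := p1 + sg p1 - (p0 + sg p0).

Lemma Grec N : G N.+1 (bool2R R) = (p0 + sg p0) + rr * G N (bool2R R).
Proof.
rewrite /G key.
transitivity (\sum_(y : {ffun 'I_N.+1 -> bool}) ((p0 + sg p0) * (Wt R ww N y * 1) + rr * (Wt R ww N y * bool2R R (y (inord N))))).
  apply: eq_bigr => y _; rewrite big_bool /= wtrue /=.
  by case: (y (inord N)); rewrite /rr /=; ring.
rewrite big_split /= -!mulr_sumr.
by have := G1 N; rewrite /G => ->; rewrite mulr1.
Qed.

Lemma Glow N : 0 <= rr -> rr ^+ N * q <= G N (bool2R R).
Proof.
move=> hr; elim: N => [|N IH].
  rewrite /G base big_bool /= mulr1 mulr0 addr0 wtrue expr0 mul1r /=.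
  by rewrite lerDl ltW // (sg_pos _ (mu_b 0 true)).
rewrite Grec exprS -mulrA.
have h0 : 0 <= p0 + sg p0.
  by have := sg_pos _ hp0; case/andP: hp0 => ? ? ?; apply: addr_ge0; apply: ltW.
by rewrite -[X in X <= _]add0r lerD // ler_wpM2l.
Qed.

Lemma L1low m : 0 <= rr -> rr ^+ m.+1 * q <= L1_last q p0 p1 m.
Proof.
move=> hr; apply: (le_trans (Glow m.+1 hr)).
rewrite /L1_last /L1.
have H : \sum_(S : {set 'I_m.+2}) fhat q p0 p1 (@f_last R m) S <= \sum_(S : {set 'I_m.+2}) `|fhat q p0 p1 (@f_last R m) S|.
  by apply: ler_sum => S _; exact: ler_norm.
apply: le_trans H; rewrite le_eqVlt; apply/orP; left; apply/eqP.
rewrite /fhat exchange_big /= /G.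
apply: eq_bigr => x _; rewrite -mulr_sumr link //.
Qed.


Lemma omega (r : R) : 0 <= r -> r <= rr -> 1 <= rr -> BigOmegaPow (L1_last q p0 p1) r.
Proof.
move=> r0 rle r1; exists q; split; first by case/andP: hq.
exists 0%N => m _.
have hr0 : 0 <= rr by apply: le_trans r1.
apply: le_trans (L1low m hr0).
have h1 : r ^+ m <= rr ^+ m by apply: lerXn2r.
have h2 : rr ^+ m <= rr ^+ m.+1 by rewrite exprS ler_peMl // exprn_ge0.
have q0 : 0 <= q by case/andP: hq => /ltW.
by rewrite mulrC ler_wpM2r // (le_trans h1 h2).
Qed.

End Spec.

Lemma sqrt_ge (R : realType) (a x : R) : 0 <= a -> a ^+ 2 <= x -> a <= Num.sqrt x.
Proof. by move=> ha hx; rewrite -(ger0_norm ha) -sqrtr_sqr; exact: ler_wsqrtr. Qed.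
Lemma sqrt_le (R : realType) (a x : R) : 0 <= a -> x <= a ^+ 2 -> Num.sqrt x <= a.
Proof. by move=> ha hx; rewrite -(ger0_norm ha) -sqrtr_sqr; exact: ler_wsqrtr. Qed.
Lemma sqrt_gt (R : realType) (a x : R) : 0 <= a -> a ^+ 2 < x -> a < Num.sqrt x.
Proof.
move=> ha hx; rewrite -(ger0_norm ha) -sqrtr_sqr ltr_sqrt //.
by apply: le_lt_trans hx; rewrite exprn_ge0.
Qed.

Lemma Drr (R : realType) (p0 p1 : R) : p0 <= p1 -> sg R p0 <= sg R p1 ->
  D_mu p0 p1 + D_sigma p0 p1 = rr R p0 p1.
Proof.
move=> h1 h2; rewrite /D_mu /D_sigma /rr -/(sg R p1) -/(sg R p0).
rewrite !ger0_norm ?subr_ge0 //; ring.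
Qed.



Lemma part1 (R : realType) (e : R) : 0 < e -> e * (10 * 10000) = 1 ->
  let p0 := e in let p1 := 2^-1 + e + 353/1000 in
  0 < p0 < 1 /\ 0 < p1 < 1 /\ p0 <= p1 /\ sg R p0 <= sg R p1 /\ 6/5 < rr R p0 p1.
Proof.
move=> e0 he p0 p1; rewrite /p0 /p1.
have hs1 : 354/1000 <= sg R (2^-1 + e + 353/1000).
  apply: sqrt_ge; first lra.
  rewrite expr2; nra.
have hs0 : sg R e <= 32/10000.
  apply: sqrt_le; first lra.
  rewrite expr2; nra.
rewrite /rr; split; first lra.
split; first lra. split; first lra. split; lra.
Qed.

Lemma part2 (R : realType) (c : R) : 0 < c -> c <= 246 / 10000 ->
  let p0 := c in let p1 := 2^-1 + c + 2 * Num.sqrt c in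
  0 < p0 < 1 /\ 0 < p1 < 1 /\ p0 <= p1 /\ sg R p0 <= sg R p1 /\ 1 + c < rr R p0 p1.
Proof.
move=> c0 c1 p0 p1; rewrite /p0 /p1.
set s := Num.sqrt c.
have s0 : 0 < s by rewrite sqrtr_gt0.
have cs : c = s ^+ 2 by rewrite sqr_sqrtr // ltW.
have sb : s <= 3137 / 20000.
  apply: sqrt_le; first lra.
  rewrite expr2; lra.
have hs0 : sg R c <= s.
  apply: sqrt_le; first lra.
  rewrite -cs; nra.
have hs1 : 2^-1 - s + s^+2 < sg R (2^-1 + c + 2 * s).
  apply: sqrt_gt; first by rewrite expr2; nra.
  rewrite cs !expr2; nra.
rewrite expr2 in hs1 cs.
rewrite /rr; split; first lra.
split; first by apply/andP; split; nra.
split; first lra. split; nra.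
Qed.

Theorem mainTheorem10 (R : realType) (q : R) (hq : 0 < q < 1) :
  (let p0 : R := 10 ^- 5 in
   let p1 : R := 2^-1 + 10 ^- 5 + 353 / 1000 in
   6 / 5 < D_mu p0 p1 + D_sigma p0 p1 /\
   BigOmegaPow (L1_last q p0 p1) (6 / 5))
  /\
  (forall c : R, 0 < c -> c <= 246 / 10000 ->
   let p0 : R := c in
   let p1 : R := 2^-1 + c + 2 * Num.sqrt c in
   1 + c < D_mu p0 p1 + D_sigma p0 p1 /\
   BigOmegaPow (L1_last q p0 p1) (1 + c)).
Proof.
split.
  move=> p0 p1; rewrite /p0 /p1.
  have e0 : 0 < (10:R) ^- 5 by rewrite invr_gt0 exprn_gt0.
  have he : (10:R) ^- 5 * (10 * 10000) = 1.
    have -> : (10:R) ^+ 5 = 10 * 10000 by rewrite !exprS expr0; ring.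
    by rewrite mulVf //; lra.
  have [h0 [h1 [h2 [h3 h4]]]] := part1 _ _ e0 he.
  rewrite Drr //; split => //.
  apply: omega => //; lra.
move=> c c0 c1 p0 p1; rewrite /p0 /p1.
have [h0 [h1 [h2 [h3 h4]]]] := part2 _ _ c0 c1.
rewrite Drr //; split => //.
apply: omega => //; lra.
Qed.
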